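(* Let $\mathcal H$ be a real Hilbert space. Let $(T_i)_{i\in I}$ be a finite family of nonexpansive operators from $\mathcal H$ to $\mathcal H$ such that $\bigcap_{i\in I}\mathrm{Fix}\,T_i\neq\varnothing$, and let $(\alpha_i)_{i\in I}$ be real numbers in $\left]0,1\right[$ such that, for every $i\in I$, $T_i$ is $\alpha_i$-averaged. Let $p$ be a strictly positive integer, for every $k\in\{1,\ldots,p\}$ let $m_k$ be a strictly positive integer and let $\omega_k\in\left]0,1\right]$, and suppose that $\mathrm{i}\colon\{(k,l)\mid k\in\{1,\ldots,p\},\,l\in\{1,\ldots,m_k\}\}\to I$ is surjective and that $\sum_{k=1}^{p}\omega_k=1$. Define $$T=\sum_{k=1}^{p}\omega_kT_{\mathrm{i}(k,1)}\cdots T_{\mathrm{i}(k,m_k)}.$$ Then: (i) Setting $$\alpha=\sum_{k=1}^{p}\dfrac{\omega_k}{1+\dfrac{1}{\sum_{i=1}^{m_k}\dfrac{\alpha_{\mathrm{i}(k,i)}}{1-\alpha_{\mathrm{i}(k,i)}}}},$$ $T$ is $\alpha$-averaged and $\mathrm{Fix}\,T=\bigcap_{i\in I}\mathrm{Fix}\,T_i$. (ii) Let $(\lambda_n)_{n\in\mathbb N}$ be a sequence in $\left]0,1/\alpha\right[$ (with $\alpha$ as in (i)) such that $\sum_{n\in\mathbb N}\lambda_n(1/\alpha-\lambda_n)=+\infty$, let $x_0\in\mathcal H$, and set $x_{n+1}=x_n+\lambda_n(Tx_n-x_n)$ for every $n\in\mathbb N$. Then $(x_n)_{n\in\mathbb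 N}$ converges weakly to a point in $\bigcap_{i\in I}\mathrm{Fix}\,T_i$.
   Context: An operator $T\colon D\to\mathcal H$ ($D\subset\mathcal H$ nonempty) is nonexpansive if it is 1-Lipschitz. For $\alpha\in\left]0,1\right[$, a nonexpansive $T$ is $\alpha$-averaged if there exists a nonexpansive $R\colon D\to\mathcal H$ with $T=(1-\alpha)\mathrm{Id}+\alpha R$. $\mathrm{Fix}\,T=\{x\mid Tx=x\}$. *)

(* Defs.v *)
From mathcomp Require Import all_boot all_order all_algebra.
From mathcomp Require Import all_classical all_reals all_analysis.
Set Implicit Arguments. Unset Strict Implicit. Unset Printing Implicit Defensive.
Import Order.TTheory GRing.Theory Num.Theory.
Import numFieldNormedType.Exports.
Local Open Scope classical_set_scope.
Local Open Scope ring_scope.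

(* A real Hilbert space is modelled as a complete normed space H over a
   real field R together with an inner product inducing its norm. *)
Definition is_inner_product (R : realType) (H : completeNormedModType R)
  (ip : H -> H -> R) : Prop :=
  [/\ (forall x y, ip x y = ip y x),
      (forall a x y z, ip (a *: x + y) z = a * ip x z + ip y z)
    & (forall x, ip x x = `|x| ^+ 2)].

Definition nonexpansive (R : realType) (H : completeNormedModType R)
  (T : H -> H) : Prop := forall x y, `|T x - T y| <= `|x - y|.

Definition Fix (T0 : Type) (T : T0 -> T0) : set T0 := [set x | T x = x].

Definition averaged (R : realType) (H : completeNormedModType R)
  (alpha : R) (T : H -> H) : Prop :=
  [/\ 0 < alpha < 1, nonexpansive T &
      exists Rop : H -> H, nonexpansive Rop /\
        forall x, T x = (1 - alpha) *: x + alpha *: Rop x].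

Definition comp_list (T0 : Type) (s : seq (T0 -> T0)) : T0 -> T0 :=
  foldr (fun f g => f \o g) id s.

(* T_{i(k,1)} ... T_{i(k,m_k)}  (indices shifted to start at 0) *)
Definition block_comp (R : realType) (H : completeNormedModType R)
  (I : finType) (T : I -> H -> H) (p : nat) (m : 'I_p -> nat)
  (idx : forall k : 'I_p, 'I_(m k) -> I) (k : 'I_p) : H -> H :=
  comp_list [seq T (idx k l) | l <- enum 'I_(m k)].

Definition Tbar (R : realType) (H : completeNormedModType R)
  (I : finType) (T : I -> H -> H) (p : nat) (m : 'I_p -> nat)
  (idx : forall k : 'I_p, 'I_(m k) -> I) (omega : 'I_p -> R) : H -> H :=
  fun x => \sum_(k < p) omega k *: block_comp T idx k x.

Definition alpha_bar (R : realType) (I : finType) (a : I -> R)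
  (p : nat) (m : 'I_p -> nat) (idx : forall k : 'I_p, 'I_(m k) -> I)
  (omega : 'I_p -> R) : R :=
  \sum_(k < p) omega k /
     (1 + 1 / (\sum_(l < m k) a (idx k l) / (1 - a (idx k l)))).

Definition weak_cvg (R : realType) (H : completeNormedModType R)
  (ip : H -> H -> R) (x : nat -> H) (z : H) : Prop :=
  forall y, (fun n => ip (x n) y) @ \oo --> ip z y.

(* Main.v *)
Require Import Defs.
From mathcomp Require Import all_boot all_order all_algebra.
From mathcomp Require Import all_classical all_reals all_analysis.
From mathcomp Require Import ring lra.
Import Order.TTheory GRing.Theory Num.Theory.
Import numFieldNormedType.Exports.
Local Open Scope classical_set_scope.
Local Open Scope ring_scope.

Section Hilb.
Variables (R : realType) (H : completeNormedModType R) (ip : H -> H -> R).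
Hypothesis hip : is_inner_product ip.

Lemma ipC x y : ip x y = ip y x. Proof. by case: hip. Qed.
Lemma ip_lin a x y z : ip (a *: x + y) z = a * ip x z + ip y z.
Proof. by case: hip. Qed.
Lemma ipxx x : ip x x = `|x| ^+ 2. Proof. by case: hip. Qed.
Lemma ip0l z : ip 0 z = 0.
Proof.
have := ip_lin 1 0 0 z; rewrite scaler0 addr0 mul1r => h.
lra.
Qed.
Lemma ipDl x y z : ip (x + y) z = ip x z + ip y z.
Proof. by rewrite -{1}[x]scale1r ip_lin mul1r. Qed.
Lemma ipZl a x z : ip (a *: x) z = a * ip x z.
Proof. by rewrite -[a *: x]addr0 ip_lin ip0l addr0. Qed.
Lemma ipNl x z : ip (- x) z = - ip x z.
Proof. by rewrite -scaleN1r ipZl mulN1r. Qed.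
Lemma ipBl x y z : ip (x - y) z = ip x z - ip y z.
Proof. by rewrite ipDl ipNl. Qed.
Lemma ipDr x y z : ip z (x + y) = ip z x + ip z y.
Proof. by rewrite ipC ipDl !(ipC z). Qed.
Lemma ipZr a x z : ip z (a *: x) = a * ip z x.
Proof. by rewrite ipC ipZl ipC. Qed.
Lemma ipNr x z : ip z (- x) = - ip z x.
Proof. by rewrite ipC ipNl ipC. Qed.
Lemma ipBr x y z : ip z (x - y) = ip z x - ip z y.
Proof. by rewrite ipDr ipNr. Qed.

Lemma convex_id (a : R) (d e : H) :
  `|(1 - a) *: d + a *: e| ^+ 2 =
  (1 - a) * `|d| ^+ 2 + a * `|e| ^+ 2 - a * (1 - a) * `|d - e| ^+ 2.
Proof.
rewrite -!ipxx !(ipDl, ipDr, ipZl, ipZr, ipNl, ipNr) (ipC e d).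
ring.
Qed.

Lemma sq_shift (d y : H) (t : R) :
  `|d - t *: y| ^+ 2 = `|d| ^+ 2 - 2 * t * ip d y + t ^+ 2 * `|y| ^+ 2.
Proof.
rewrite -!ipxx !(ipDl, ipDr, ipZl, ipZr, ipNl, ipNr) (ipC y d).
ring.
Qed.

Lemma vec_eq u v : ip (u - v) (u - v) = 0 -> u = v.
Proof. by rewrite ipxx => /eqP; rewrite sqrf_eq0 normr_eq0 subr_eq0 => /eqP. Qed.

Lemma ip0r z : ip z 0 = 0. Proof. by rewrite ipC ip0l. Qed.

Ltac ipexp := rewrite ?(ipDl, ipDr, ipZl, ipZr, ipNl, ipNr, ip0l, ip0r);
  repeat match goal with |- context[ip ?u ?v] =>
    match goal with |- context[ip v u] =>
      assert_fails (unify u v); rewrite [ip v u]ipC end end.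

Definition Qk (k : R) (S : H -> H) :=
  nonexpansive S /\ forall x y,
    k * `|S x - S y| ^+ 2 + `|(x - S x) - (y - S y)| ^+ 2 <= k * `|x - y| ^+ 2.

Lemma avg_Q a S : averaged a S -> Qk (a / (1 - a)) S.
Proof.
case=> /andP[a0 a1] neS [Rop [neR hS]]; split => // x y.
have key : a / (1 - a) * `|S x - S y| ^+ 2 + `|(x - S x) - (y - S y)| ^+ 2
   - a / (1 - a) * `|x - y| ^+ 2 =
   a / (1 - a) * a * (`|Rop x - Rop y| ^+ 2 - `|x - y| ^+ 2).
  rewrite !hS -!ipxx; ipexp.
  by field; rewrite subr_eq0 gt_eqF.
rewrite -subr_le0 key; apply: mulr_ge0_le0.
  by rewrite mulr_ge0 ?divr_ge0 ?subr_ge0 // ltW.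
rewrite subr_le0 lerXn2r ?nnegrE //; exact: neR.
Qed.

Lemma Q_avg k S : 0 < k -> Qk k S -> averaged (k / (1 + k)) S.
Proof.
move=> k0 [neS hQ]; set a := k / (1 + k).
have k1 : 0 < 1 + k by lra.
have a0 : 0 < a by rewrite divr_gt0.
have a1 : a < 1 by rewrite /a ltr_pdivrMr // mul1r; lra.
split; first by rewrite a0 a1.
  exact: neS.
exists (fun x => a^-1 *: (S x - (1 - a) *: x)); split; last first.
  by move=> x; rewrite scalerA mulfV ?gt_eqF // scale1r addrC subrK.
move=> x y; rewrite -ler_sqr ?nnegrE //.
have key : `|a^-1 *: (S x - (1 - a) *: x) - a^-1 *: (S y - (1 - a) *: y)| ^+ 2
   - `|x - y| ^+ 2 = (1 + k) / k ^+ 2 *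
   (k * `|S x - S y| ^+ 2 + `|(x - S x) - (y - S y)| ^+ 2 - k * `|x - y| ^+ 2).
  rewrite /a -!ipxx; ipexp.
  by field; rewrite ?gt_eqF.
rewrite -subr_le0 key; apply: mulr_ge0_le0.
  by rewrite divr_ge0 ?exprn_ge0 ?ltW.
by rewrite subr_le0 hQ.
Qed.

Lemma Q_id : Qk 0 id.
Proof.
split => [x y|x y] //=.
by rewrite !subrr normr0 expr0n /= !mul0r addr0.
Qed.

Lemma Q_comp k1 k2 S1 S2 : 0 <= k1 -> 0 <= k2 -> Qk k1 S1 -> Qk k2 S2 ->
  Qk (k1 + k2) (S1 \o S2).
Proof.
move=> k10 k20 [ne1 h1] [ne2 h2]; split.
  by move=> x y /=; apply: le_trans (ne1 _ _) (ne2 _ _).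
move=> x y /=.
set A := `|(x - S2 x) - (y - S2 y)|.
set B := `|(S2 x - S1 (S2 x)) - (S2 y - S1 (S2 y))|.
have eAB : (x - S1 (S2 x)) - (y - S1 (S2 y)) =
   ((x - S2 x) - (y - S2 y)) + ((S2 x - S1 (S2 x)) - (S2 y - S1 (S2 y))).
  by apply: vec_eq; ipexp; ring.
have hC : `|(x - S1 (S2 x)) - (y - S1 (S2 y))| <= A + B by rewrite eAB ler_normD.
have := h2 x y; have := h1 (S2 x) (S2 y); have := ne1 (S2 x) (S2 y);
have := ne2 x y.
rewrite -/A -/B.
set n0 := `|x - y|; set n1 := `|S2 x - S2 y|; set n2 := `|S1 (S2 x) - S1 (S2 y)|.
set C := `|_ - _ - _| in hC *.
have A0 : 0 <= A := normr_ge0 _.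
have B0 : 0 <= B := normr_ge0 _.
have C0 : 0 <= C := normr_ge0 _.
have n20 : 0 <= n2 := normr_ge0 _.
have n10 : 0 <= n1 := normr_ge0 _.
have n00 : 0 <= n0 := normr_ge0 _.
move=> e1 e2 q1 q2.
have X0 : 0 <= n0 ^+ 2 - n1 ^+ 2 by rewrite subr_ge0 ler_sqr ?nnegrE.
have Y0 : 0 <= n1 ^+ 2 - n2 ^+ 2 by rewrite subr_ge0 ler_sqr ?nnegrE.
have hAB : 2 * A * B <= k1 * (n0 ^+ 2 - n1 ^+ 2) + k2 * (n1 ^+ 2 - n2 ^+ 2).
  rewrite -ler_sqr ?nnegrE; last 2 first.
  - by rewrite !mulr_ge0.
  - by rewrite addr_ge0 ?mulr_ge0.
  set X := n0 ^+ 2 - n1 ^+ 2 in X0 *; set Y := n1 ^+ 2 - n2 ^+ 2 in Y0 *.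
  have hA : A ^+ 2 <= k2 * X by rewrite /X; lra.
  have hB : B ^+ 2 <= k1 * Y by rewrite /Y; lra.
  have hAB : A ^+ 2 * B ^+ 2 <= (k2 * X) * (k1 * Y).
    by apply: ler_pM => //; apply: sqr_ge0.
  have : 0 <= (k1 * X - k2 * Y) ^+ 2 := sqr_ge0 _.
  nra.
have : C ^+ 2 <= (A + B) ^+ 2 by rewrite ler_sqr ?nnegrE ?addr_ge0.
nra.
Qed.
Lemma Q_comp_list (X : eqType) (s : seq X) (F : X -> H -> H) (kap : X -> R) :
  (forall l, l \in s -> 0 <= kap l /\ Qk (kap l) (F l)) ->
  0 <= \sum_(l <- s) kap l /\ Qk (\sum_(l <- s) kap l) (comp_list [seq F l | l <- s]).
Proof.
elim: s => [|l s IH] hs; first by rewrite big_nil; split => //; exact: Q_id.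
have [k0 Ql] := hs l (mem_head _ _).
have [s0 Qs] := IH (fun l' hl' => hs l' (mem_behead (hl' : l' \in behead (l :: s)))).
rewrite big_cons; split; first exact: addr_ge0.
exact: Q_comp.
Qed.

Lemma comp_fixz (X : eqType) (s : seq X) (F : X -> H -> H) z :
  (forall l, l \in s -> F l z = z) -> comp_list [seq F l | l <- s] z = z.
Proof.
elim: s => [|l s IH] hs //=.
by rewrite IH ?hs ?mem_head // => l' hl'; apply: hs; rewrite in_cons hl' orbT.
Qed.

Lemma comp_fix (X : eqType) (s : seq X) (F : X -> H -> H) (kap : X -> R) z x :
  (forall l, l \in s -> [/\ 0 < kap l, Qk (kap l) (F l) & F l z = z]) ->
  comp_list [seq F l | l <- s] x = x -> forall l, l \in s -> F l x = x.
Proof.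
elim: s => [|l s IH] hs //= hx.
have hs' l' : l' \in s -> [/\ 0 < kap l', Qk (kap l') (F l') & F l' z = z].
  by move=> hl'; apply: hs; rewrite in_cons hl' orbT.
have [k0 [neF QF] Fz] := hs l (mem_head _ _).
set c := comp_list _ in hx.
have [_ [nec _]] : 0 <= \sum_(l <- s) kap l /\ Qk (\sum_(l <- s) kap l) c.
  by apply: Q_comp_list => l' /hs' [/ltW ? ? _].
have cz : c z = z by apply: comp_fixz => l' /hs' [].
have h1 : `|c x - z| <= `|x - z| by rewrite -{1}cz nec.
have := QF (c x) z; rewrite hx Fz subrr subr0.
move=> h2.
have h3 : `|c x - x| ^+ 2 <= 0.
  have : `|c x - z| ^+ 2 <= `|x - z| ^+ 2 by rewrite lerXn2r ?nnegrE.
  nra.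
have ecx : c x = x.
  by apply/eqP; rewrite -subr_eq0 -normr_eq0 -sqrf_eq0 eq_le h3 sqr_ge0.
move=> l'; rewrite in_cons => /orP[/eqP -> | hl']; first by rewrite -{1}ecx hx.
by apply: (IH hs' ecx).
Qed.

Lemma sum_pos (p : nat) (f : 'I_p -> R) : (0 < p)%N -> (forall k, 0 < f k) ->
  0 < \sum_k f k.
Proof.
move=> p0 hf; rewrite (bigD1 (Ordinal p0)) //=.
have : 0 <= \sum_(i | i != Ordinal p0) f i by apply: sumr_ge0 => i _; apply/ltW.
have := hf (Ordinal p0); lra.
Qed.

Lemma avg_convex (p : nat) (w al : 'I_p -> R) (S : 'I_p -> H -> H) :
  (0 < p)%N -> (forall k, 0 < w k) -> \sum_k w k = 1 ->
  (forall k, averaged (al k) (S k)) ->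
  averaged (\sum_k w k * al k) (fun x => \sum_k w k *: S k x).
Proof.
move=> p0 w0 w1 hS.
have [Rf hRf] := @choice _ _ (fun k (Rk : H -> H) => nonexpansive Rk /\
   forall x, S k x = (1 - al k) *: x + al k *: Rk x)
   (fun k => match hS k with And3 _ _ h => h end).
have al01 k : 0 < al k < 1 by case: (hS k).
set al0 := \sum_k w k * al k.
have a0 : 0 < al0.
  by apply: sum_pos => // k; case/andP: (al01 k) => h _; rewrite mulr_gt0 ?w0.
have a1 : al0 < 1.
  have : 0 < \sum_k w k * (1 - al k).
    apply: sum_pos => // k; have := al01 k; case/andP => _ h.
    by rewrite mulr_gt0 ?w0 // subr_gt0.
  under eq_bigr do rewrite mulrBr mulr1.
  by rewrite sumrB w1 subr_gt0.
split; first by rewrite a0 a1.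
  move=> x y; rewrite -sumrB.
  under eq_bigr do rewrite -scalerBr.
  apply: le_trans (ler_norm_sum _ _ _) _.
  apply: le_trans (_ : \sum_k w k * `|x - y| <= _); last by rewrite -mulr_suml w1 mul1r.
  apply: ler_sum => k _; rewrite normrZ ger0_norm; last exact: ltW.
  by rewrite ler_pM2l ?w0 //; case: (hS k).
exists (fun x => al0^-1 *: \sum_k (w k * al k) *: Rf k x); split.
  move=> x y; rewrite -scalerBr -sumrB.
  under eq_bigr do rewrite -scalerBr.
  rewrite normrZ ger0_norm; last by rewrite invr_ge0 ltW.
  rewrite ler_pdivrMl //.
  apply: le_trans (ler_norm_sum _ _ _) _.
  rewrite /al0 mulr_suml; apply: ler_sum => k _.
  rewrite normrZ ger0_norm; last by rewrite mulr_ge0 ?ltW //; case/andP: (al01 k).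
  rewrite ler_pM2l; first by case: (hRf k) => ->.
  by rewrite mulr_gt0 //; case/andP: (al01 k).
move=> x; rewrite scalerA mulfV ?gt_eqF // scale1r.
have -> : 1 - al0 = \sum_k w k * (1 - al k).
  by under eq_bigr do rewrite mulrBr mulr1; rewrite sumrB w1.
rewrite scaler_suml -big_split /=; apply: eq_bigr => k _.
by case: (hRf k) => _ ->; rewrite scalerDr !scalerA.
Qed.

Lemma jensen (p : nat) (w : 'I_p -> R) (v : 'I_p -> H) :
  (forall k, 0 <= w k) -> \sum_k w k = 1 ->
  `|\sum_k w k *: v k| ^+ 2 <= \sum_k w k * `|v k| ^+ 2.
Proof.
move=> w0 w1; set s := \sum_k w k * `|v k|.
have h1 : `|\sum_k w k *: v k| <= s.
  apply: le_trans (ler_norm_sum _ _ _) _; apply: ler_sum => k _.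
  by rewrite normrZ ger0_norm.
have h2 : 0 <= \sum_k w k * (`|v k| - s) ^+ 2.
  by apply: sumr_ge0 => k _; rewrite mulr_ge0 ?sqr_ge0.
have e : \sum_k w k * (`|v k| - s) ^+ 2 =
    \sum_k w k * `|v k| ^+ 2 - (2 * s) * s + s ^+ 2 * \sum_k w k.
  rewrite (eq_bigr (fun k => (w k * `|v k| ^+ 2 - (2 * s) * (w k * `|v k|))
     + s ^+ 2 * w k)); last by move=> k _; ring.
  by rewrite big_split sumrB -!mulr_sumr.
rewrite w1 mulr1 in e.
have s0 : 0 <= s := le_trans (normr_ge0 _) h1.
have : `|\sum_k w k *: v k| ^+ 2 <= s ^+ 2 by apply: lerXn2r; rewrite ?nnegrE.
lra.
Qed.

Lemma part_i (I : finType) (T : I -> H -> H) (a : I -> R)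
  (p : nat) (m : 'I_p -> nat) (omega : 'I_p -> R)
  (idx : forall k : 'I_p, 'I_(m k) -> I) :
  (\bigcap_i Fix (T i)) !=set0 ->
  (forall i, averaged (a i) (T i)) ->
  (0 < p)%N ->
  (forall k, (0 < m k)%N) ->
  (forall k, 0 < omega k <= 1) ->
  (forall i, exists k, exists l, idx k l = i) ->
  \sum_(k < p) omega k = 1 ->
  averaged (alpha_bar a idx omega) (Tbar T idx omega) /\
  Fix (Tbar T idx omega) = \bigcap_i Fix (T i).
Proof.
move=> [z hz] hT p0 m0 om0 surj om1.
have a01 i : 0 < a i < 1 by case: (hT i).
set kap := fun i => a i / (1 - a i).
have kap0 i : 0 < kap i.
  by case/andP: (a01 i) => h1 h2; rewrite /kap divr_gt0 // subr_gt0.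
set kk := fun k : 'I_p => \sum_(l <- enum 'I_(m k)) kap (idx k l).
have kk0 k : 0 < kk k.
  by rewrite /kk big_enum /=; apply: sum_pos => // l.
have QB k : Qk (kk k) (block_comp T idx k).
  have [] := @Q_comp_list _ (enum 'I_(m k)) (fun l => T (idx k l))
    (fun l => kap (idx k l)).
    by move=> l _; split; [apply/ltW | apply: avg_Q].
  by [].
have omp k : 0 < omega k by case/andP: (om0 k).
split.
  have -> : alpha_bar a idx omega = \sum_k omega k * (kk k / (1 + kk k)).
    rewrite /alpha_bar; apply: eq_bigr => k _.
    rewrite /kk big_enum /= -/(kap _).
    have := kk0 k; rewrite /kk big_enum /= => h.
    by field; rewrite ?gt_eqF //; apply: addr_gt0.
  apply: avg_convex => // k; apply: Q_avg => //.
rewrite eqEsubset; split; last first.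
  move=> x hx; rewrite /Fix /= /Tbar.
  have Bx k : block_comp T idx k x = x by apply: comp_fixz => l _; apply: hx.
  under eq_bigr do rewrite Bx.
  by rewrite -scaler_suml om1 scale1r.
move=> x; rewrite /Fix /= => hx.
have Bz k : block_comp T idx k z = z by apply: comp_fixz => l _; apply: hz.
have hQ k : kk k * `|block_comp T idx k x - z| ^+ 2 +
    `|x - block_comp T idx k x| ^+ 2 <= kk k * `|x - z| ^+ 2.
  by case: (QB k) => _ /(_ x z); rewrite Bz subrr subr0.
have exz : x - z = \sum_k omega k *: (block_comp T idx k x - z).
  under eq_bigr do rewrite scalerBr.
  by rewrite sumrB -scaler_suml om1 scale1r -{1}hx.
have hJ := @jensen _ omega (fun k => block_comp T idx k x - z)
  (fun k => ltW (omp k)) om1.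
rewrite -exz in hJ.
have hsum : \sum_k omega k * (`|x - block_comp T idx k x| ^+ 2 / kk k) <= 0.
  apply: le_trans (_ : \sum_k omega k * (`|x - z| ^+ 2
     - `|block_comp T idx k x - z| ^+ 2) <= _).
    apply: ler_sum => k _; rewrite ler_pM2l // ler_pdivrMr //.
    have := hQ k; lra.
  under eq_bigr do rewrite mulrBr.
  by rewrite sumrB -mulr_suml om1 mul1r subr_le0.
have hB k : block_comp T idx k x = x.
  have h0 : forall k, 0 <= omega k * (`|x - block_comp T idx k x| ^+ 2 / kk k).
    by move=> k'; rewrite mulr_ge0 ?divr_ge0 ?sqr_ge0 ?ltW.
  have := @psumr_eq0P _ _ xpredT _ (fun k _ => h0 k).
  move=> /(_ _ k isT); rewrite (_ : \sum_(i | xpredT i) _ = 0); last first.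
    by apply/eqP; rewrite eq_le hsum sumr_ge0.
  move=> /(_ erefl) /eqP; rewrite mulf_eq0 (gt_eqF (omp k)) /=.
  rewrite mulf_eq0 invr_eq0 (gt_eqF (kk0 k)) orbF sqrf_eq0 normr_eq0 subr_eq0.
  by move=> /eqP.
move=> i _; have [k [l <-]] := surj i.
apply: (@comp_fix _ (enum 'I_(m k)) (fun l => T (idx k l))
   (fun l => kap (idx k l)) z x) => //; last by rewrite mem_enum.
move=> l' _; split => //; first exact: avg_Q.
  exact: hz.
exact: hB.
Qed.

Definition Ub (u : nat -> R) (c : R) :=
  forall e, 0 < e -> exists N, forall n, (N <= n)%N -> u n <= c + e.

Definition inv_sn (k : nat) : R := k.+1%:R^-1.

Lemma inv_sn_gt0 k : 0 < inv_sn k.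
Proof. by rewrite /inv_sn invr_gt0 ltr0n. Qed.

Lemma archi_inv (e : R) : 0 < e -> exists K : nat, forall k, (K <= k)%N -> inv_sn k <= e.
Proof.
move=> e0; rewrite /inv_sn; exists (Num.trunc e^-1) => k hk.
have h1 : e^-1 < k.+1%:R.
  apply: lt_le_trans (truncnS_gt _) _; by rewrite ler_nat ltnS.
have h2 : 0 < k.+1%:R :> R by rewrite ltr0n.
rewrite -[_^-1]mulr1 ler_pdivrMl //.
have : e * e^-1 = 1 by rewrite mulfV ?gt_eqF.
nra.
Qed.

Lemma Ub_ge0 u c : (forall n, 0 <= u n) -> Ub u c -> 0 <= c.
Proof.
move=> u0 hu; apply/ler_addgt0Pr => e e0.
by have [N hN] := hu e e0; apply: le_trans (u0 N) (hN N _).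
Qed.

Lemma mid_id (zz u v : H) :
  `|zz - 2^-1 *: (u + v)| ^+ 2 =
  (`|zz - u| ^+ 2 + `|zz - v| ^+ 2) / 2 - `|u - v| ^+ 2 / 4.
Proof. by rewrite -!ipxx; ipexp; field. Qed.

Lemma Ub_mid (z : nat -> H) u v c d :
  Ub (fun n => `|z n - u| ^+ 2) c -> Ub (fun n => `|z n - v| ^+ 2) d ->
  Ub (fun n => `|z n - 2^-1 *: (u + v)| ^+ 2) ((c + d) / 2 - `|u - v| ^+ 2 / 4).
Proof.
move=> hu hv e e0; have [N1 h1] := hu e e0; have [N2 h2] := hv e e0.
exists (maxn N1 N2) => n hn; rewrite mid_id.
have := h1 n (leq_trans (leq_maxl _ _) hn); have := h2 n (leq_trans (leq_maxr _ _) hn).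
lra.
Qed.

Lemma sq_tri (X Y D : R) : 0 <= X -> 0 <= Y -> 0 <= D -> X <= Y + D ->
  X ^+ 2 <= Y ^+ 2 + D * (2 * Y + D).
Proof. move=> *; nra. Qed.

Lemma near_oo (P : nat -> Prop) : (\forall n \near \oo, P n) ->
  exists N, forall n, (N <= n)%N -> P n.
Proof. case=> N _ hN; exists N => n hn; exact: hN. Qed.

Lemma center (z : nat -> H) (B : R) : (forall n, `|z n| <= B) ->
  exists A M, Ub (fun n => `|z n - A| ^+ 2) M /\
    (forall u c, Ub (fun n => `|z n - u| ^+ 2) c -> M <= c).
Proof.
move=> hB.
have B0 : 0 <= B := le_trans (normr_ge0 _) (hB 0%N).
set E := [set c | exists u, Ub (fun n => `|z n - u| ^+ 2) c].
have EB : E (B ^+ 2).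
  exists 0 => e e0; exists 0%N => n _; rewrite subr0.
  have : `|z n| ^+ 2 <= B ^+ 2 by apply: lerXn2r; rewrite ?nnegrE.
  lra.
have Elb : has_lbound E.
  by exists 0 => c [u hu]; apply: Ub_ge0 hu => n; apply: sqr_ge0.
set M := inf E.
have hM : forall c, E c -> M <= c := ge_inf Elb.
have key u v c d : Ub (fun n => `|z n - u| ^+ 2) c -> Ub (fun n => `|z n - v| ^+ 2) d ->
    `|u - v| ^+ 2 <= 2 * (c + d - 2 * M).
  move=> hu hv; have := hM ((c + d) / 2 - `|u - v| ^+ 2 / 4) (ex_intro _ (2^-1 *: (u + v)) (@Ub_mid z _ _ _ _ hu hv)); lra.
have adh (k : nat) : exists q : H * R,
    Ub (fun n => `|z n - q.1| ^+ 2) q.2 /\ q.2 < M + k.+1%:R^-1.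
  have kp : 0 < k.+1%:R^-1 :> R by rewrite invr_gt0 ltr0n.
  have hi : has_inf E by split => //; exists (B ^+ 2).
  have [c [u hu] hc] := @inf_adherent _ E (k.+1%:R^-1) kp hi.
  by exists (u, c).
have [f hf] := choice adh.
have cvu : cvg ((fun k => (f k).1) @ \oo).
  apply: cauchy_cvg; apply: cauchy_exP => eps eps0.
  have [K hK] : exists K : nat, forall k, (K <= k)%N -> inv_sn k <= eps ^+ 2 / 4.
    by apply: archi_inv; rewrite divr_gt0 ?exprn_gt0.
  exists (f K).1; exists K => // n hn.
  rewrite -ball_normE /ball_ /=.
  have [h1 h2] := hf K; have [h3 h4] := hf n.
  have := key _ _ _ _ h1 h3.
  have := hK K (leqnn _); have := hK n hn.
  move=> i1 i2 i3.
  have hq : eps ^+ 2 / 4 * 4 = eps ^+ 2 by rewrite divfK // pnatr_eq0.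
  have t1 : (f K).2 < M + inv_sn K := h2.
  have t1' : (f n).2 < M + inv_sn n := h4.
  have t2 : (f K).2 + (f n).2 < M + inv_sn K + (M + inv_sn n) by lra.
  have t3 : `|(f K).1 - (f n).1| ^+ 2 < 2 * (inv_sn K + inv_sn n) by lra.
  have t4 : inv_sn K + inv_sn n <= eps ^+ 2 / 2 by lra.
  have hlt : `|(f K).1 - (f n).1| ^+ 2 < eps ^+ 2 by lra.
  by rewrite -ltr_sqr ?nnegrE ?normr_ge0 ?(ltW eps0).
have [A hA] := iffLR (cvg_ex _) cvu; exists A, M; split; last first.
  by move=> u c hu; apply: hM; exists u.
move=> e e0.
set K' := 2 * (B + `|A| + 1) + 1.
have K'0 : 0 < K' by rewrite /K'; have := normr_ge0 A; lra.
set dl := Num.min 1 (e / (4 * K')).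
have dl0 : 0 < dl by rewrite lt_min ltr01 divr_gt0 ?mulr_gt0.
have dl1 : dl <= 1 by rewrite ge_min lexx.
have dl2 : dl <= e / (4 * K') by rewrite ge_min lexx orbT.
have [K1 hK1] : exists K : nat, forall k, (K <= k)%N -> inv_sn k <= e / 4.
  by apply: archi_inv; rewrite divr_gt0.
have [K2 hK2] := @near_oo (fun t => `|A - (f t).1| <= dl) (iffLR (cvgrPdist_le _ _) hA dl dl0).
set k := maxn K1 K2.
have [hk1 hk2] := hf k.
have [N hN] : exists N, forall n, (N <= n)%N -> `|z n - (f k).1| ^+ 2 <= (f k).2 + e / 2.
  by apply: hk1; rewrite divr_gt0.
have d1 := hK2 k (leq_maxr _ _).
have d2 := hK1 k (leq_maxl _ _).
exists N => n hn.
have t1 : `|z n - A| <= `|z n - (f k).1| + `|A - (f k).1|.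
  by rewrite -[z n - A](subrKA (f k).1) (distrC A); apply: ler_normD.
have t2 := @sq_tri _ _ _ (normr_ge0 _) (normr_ge0 _) (normr_ge0 _) t1.
have t3 : `|z n - (f k).1| <= B + `|A| + 1.
  apply: le_trans (ler_normB _ _) _.
  have : `|(f k).1| <= `|A| + 1.
    have eA : (f k).1 = A - (A - (f k).1) by apply: vec_eq; ipexp; ring.
    rewrite [X in `|X| <= _]eA; apply: le_trans (ler_normB _ _) _.
    by rewrite lerD2l; apply: le_trans d1 dl1.
  by have := hB n; lra.
have t4 : `|A - (f k).1| * (2 * `|z n - (f k).1| + `|A - (f k).1|) <= dl * K'.
  apply: ler_pM.
  - exact: normr_ge0.
  - by rewrite addr_ge0 ?mulr_ge0.
  - exact: d1.
  - rewrite /K'; have := le_trans d1 dl1; lra.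
have t5 : dl * K' <= e / 4.
  rewrite -ler_pdivlMr // -mulrA -invfM; exact: dl2.
have t6 : `|z n - (f k).1| ^+ 2 <= (f k).2 + e / 2 := hN n hn.
have t7 : (f k).2 < M + inv_sn k := hk2.
have t8 : inv_sn k <= e / 4 := d2.
lra.
Qed.

Lemma center_fix (z : nat -> H) (B : R) (S : H -> H) A M :
  (forall n, `|z n| <= B) -> nonexpansive S ->
  (forall e, 0 < e -> exists N, forall n, (N <= n)%N -> `|z n - S (z n)| <= e) ->
  Ub (fun n => `|z n - A| ^+ 2) M ->
  (forall u c, Ub (fun n => `|z n - u| ^+ 2) c -> M <= c) -> S A = A.
Proof.
move=> hB neS hS hA hmin.
have B0 : 0 <= B := le_trans (normr_ge0 _) (hB 0%N).
have hSA : Ub (fun n => `|z n - S A| ^+ 2) M.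
  move=> e e0.
  set K := 2 * (B + `|A|) + 1.
  have K0 : 0 < K by rewrite /K; have := normr_ge0 A; lra.
  set dl := Num.min 1 (e / (2 * K)).
  have dl0 : 0 < dl by rewrite lt_min ltr01 divr_gt0 ?mulr_gt0.
  have dl1 : dl <= 1 by rewrite ge_min lexx.
  have dl2 : dl <= e / (2 * K) by rewrite ge_min lexx orbT.
  have [N1 hN1] : exists N, forall n, (N <= n)%N -> `|z n - A| ^+ 2 <= M + e / 2.
    by apply: hA; rewrite divr_gt0.
  have [N2 hN2] := hS dl dl0.
  exists (maxn N1 N2) => n hn.
  have e1 := hN1 n (leq_trans (leq_maxl _ _) hn).
  have e2 := hN2 n (leq_trans (leq_maxr _ _) hn).
  have t1 : `|z n - S A| <= `|z n - A| + `|z n - S (z n)|.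
    have -> : z n - S A = (z n - S (z n)) + (S (z n) - S A).
      by apply: vec_eq; ipexp; ring.
    apply: le_trans (ler_normD _ _) _; rewrite addrC lerD2r; exact: neS.
  have t2 := @sq_tri _ _ _ (normr_ge0 _) (normr_ge0 _) (normr_ge0 _) t1.
  have t3 : `|z n - A| <= B + `|A| by apply: le_trans (ler_normB _ _) _; rewrite lerD2r.
  have t4 : `|z n - S (z n)| * (2 * `|z n - A| + `|z n - S (z n)|) <= dl * K.
    apply: ler_pM.
    - exact: normr_ge0.
    - by rewrite addr_ge0 ?mulr_ge0.
    - exact: e2.
    - rewrite /K; have := le_trans e2 dl1; lra.
  have t5 : dl * K <= e / 2.
    rewrite -ler_pdivlMr // -mulrA -invfM; exact: dl2.
  lra.
have := hmin _ _ (@Ub_mid z _ _ _ _ hA hSA).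
have h0 : 0 <= `|A - S A| ^+ 2 := sqr_ge0 _.
move=> h; have h2 : `|A - S A| ^+ 2 = 0 by lra.
by apply/esym/eqP; rewrite -subr_eq0 -normr_eq0 -sqrf_eq0 h2.
Qed.

Definition Cv (u : nat -> R) L :=
  forall e, 0 < e -> exists N, forall n, (N <= n)%N -> `|L - u n| <= e.

Lemma Cv_Ub u L : Cv u L -> Ub u L.
Proof.
move=> h e e0; have [N hN] := h e e0; exists N => n hn.
have := hN n hn; have := ler_norm (u n - L); rewrite distrC; lra.
Qed.

Lemma Cv_Ub_le u L c : Cv u L -> Ub u c -> L <= c.
Proof.
move=> h1 h2; apply/ler_addgt0Pr => e e0.
have e2 : 0 < e / 2 by rewrite divr_gt0.
have [N1 hN1] := h1 _ e2; have [N2 hN2] := h2 _ e2.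
have a1 := hN1 (maxn N1 N2) (leq_maxl _ _).
have a2 := hN2 (maxn N1 N2) (leq_maxr _ _).
have := ler_norm (L - u (maxn N1 N2)); lra.
Qed.

Lemma Ub_le u c d : Ub u c -> c <= d -> Ub u d.
Proof.
move=> h cd e e0; have [N hN] := h e e0; exists N => n hn.
have := hN n hn; lra.
Qed.

Lemma Cv_sub u L (phi : nat -> nat) : Cv u L -> (forall n, (n <= phi n)%N) ->
  Cv (fun n => u (phi n)) L.
Proof.
move=> h hphi e e0; have [N hN] := h e e0; exists N => n hn.
by apply: hN; apply: leq_trans hn (hphi n).
Qed.

Lemma Ub_sub u c (phi : nat -> nat) : Ub u c -> (forall n, (n <= phi n)%N) ->
  Ub (fun n => u (phi n)) c.
Proof.
move=> h hphi e e0; have [N hN] := h e e0; exists N => n hn.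
by apply: hN; apply: leq_trans hn (hphi n).
Qed.

Lemma noninc_cv (u : nat -> R) : (forall n, 0 <= u n) -> (forall n, u n.+1 <= u n) ->
  exists L, Cv u L.
Proof.
move=> u0 hu.
have hom : {homo u : n m / (n <= m)%N >-> m <= n}.
  by apply/nonincreasing_seqP.
have lb : has_lbound (range u) by exists 0 => _ [n _ <-].
have := nonincreasing_cvgn hom lb.
move/cvgrPdist_le => h; exists (inf (range u)) => e e0.
by apply: (@near_oo (fun n => `|inf (range u) - u n| <= e)); apply: h.
Qed.

Lemma contra_help (a b eps : R) : 0 < eps -> a < eps -> 2 * eps <= a -> False.
Proof. move=> *; lra. Qed.

Section KM.
Variables (S : H -> H) (mu : nat -> R) (x : nat -> H).
Hypothesis neS : nonexpansive S.
Hypothesis mu01 : forall n, 0 < mu n < 1.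
Hypothesis hx : forall n, x n.+1 = x n + mu n *: (S (x n) - x n).

Lemma KM_fejer f n : S f = f ->
  `|x n.+1 - f| ^+ 2 <= `|x n - f| ^+ 2 - mu n * (1 - mu n) * `|x n - S (x n)| ^+ 2.
Proof.
move=> Sf.
have key : `|x n.+1 - f| ^+ 2 -
   (`|x n - f| ^+ 2 - mu n * (1 - mu n) * `|x n - S (x n)| ^+ 2) =
   mu n * (`|S (x n) - f| ^+ 2 - `|x n - f| ^+ 2).
  by rewrite hx -!ipxx; ipexp; ring.
rewrite -subr_le0 key; apply: mulr_ge0_le0; first by case/andP: (mu01 n) => /ltW.
rewrite subr_le0; apply: lerXn2r; rewrite ?nnegrE //.
by rewrite -{1}Sf; apply: neS.
Qed.

Lemma KM_fejer_le f n : S f = f -> `|x n.+1 - f| ^+ 2 <= `|x n - f| ^+ 2.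
Proof.
move=> Sf; apply: le_trans (KM_fejer f n Sf) _.
have : 0 <= mu n * (1 - mu n) * `|x n - S (x n)| ^+ 2.
  case/andP: (mu01 n) => h1 h2; apply: mulr_ge0; last exact: sqr_ge0.
  by apply: mulr_ge0; [exact: ltW | rewrite subr_ge0 ltW].
lra.
Qed.

Lemma KM_bound f n : S f = f -> `|x n - f| <= `|x 0%N - f|.
Proof.
move=> Sf; elim: n => [|n IH] //.
apply: le_trans IH; rewrite -ler_sqr ?nnegrE //; exact: KM_fejer_le.
Qed.

Lemma KM_vdec n : `|x n.+1 - S (x n.+1)| <= `|x n - S (x n)|.
Proof.
have [m0 m1] := andP (mu01 n).
have -> : x n.+1 - S (x n.+1) =
    (1 - mu n) *: (x n - S (x n)) + (S (x n) - S (x n.+1)).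
  by apply: vec_eq; rewrite hx; ipexp; ring.
apply: le_trans (ler_normD _ _) _.
rewrite normrZ ger0_norm; last by rewrite subr_ge0 ltW.
have : `|S (x n) - S (x n.+1)| <= mu n * `|x n - S (x n)|.
  apply: le_trans (neS _ _) _.
  have -> : x n - x n.+1 = - (mu n *: (S (x n) - x n)).
    by apply: vec_eq; rewrite hx; ipexp; ring.
  by rewrite normrN normrZ ger0_norm ?(ltW m0) // distrC.
rewrite mulrBl mul1r; lra.
Qed.

Lemma KM_tele f e N : S f = f -> (forall n, e <= `|x n - S (x n)|) -> 0 <= e ->
  `|x N - f| ^+ 2 <= `|x 0%N - f| ^+ 2 - e ^+ 2 * \sum_(n < N) mu n * (1 - mu n).
Proof.
move=> Sf he e0; elim: N => [|N IH]; first by rewrite big_ord0 mulr0 subr0.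
rewrite big_ord_recr /= mulrDr.
have h1 := KM_fejer f N Sf.
have h2 : e ^+ 2 <= `|x N - S (x N)| ^+ 2 by apply: lerXn2r; rewrite ?nnegrE.
have h3 : 0 <= mu N * (1 - mu N).
  by case/andP: (mu01 N) => a b; rewrite mulr_ge0 ?subr_ge0 ?ltW.
have h4 : e ^+ 2 * (mu N * (1 - mu N)) <=
   mu N * (1 - mu N) * `|x N - S (x N)| ^+ 2.
  by rewrite mulrC ler_wpM2l.
lra.
Qed.

Lemma KM_vconv f : S f = f ->
  (forall K : R, exists N, K < \sum_(n < N) mu n * (1 - mu n)) ->
  forall e : R, 0 < e -> exists N, forall n, (N <= n)%N -> `|x n - S (x n)| <= e.
Proof.
move=> Sf hdiv e e0; apply: contrapT => hno.
have he : forall n, e <= `|x n - S (x n)|.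
  move=> n; rewrite leNgt; apply/negP => hn; apply: hno; exists n => m hm.
  apply/ltW; apply: le_lt_trans hn.
  elim: m hm => [|m IH]; first by rewrite leqn0 => /eqP ->.
  rewrite leq_eqVlt => /orP[/eqP <- //|]; rewrite ltnS => hm.
  exact: le_trans (KM_vdec m) (IH hm).
have e2 : 0 < e ^+ 2 by rewrite exprn_gt0.
have [N hN] := hdiv (`|x 0%N - f| ^+ 2 / e ^+ 2).
have := KM_tele f e N Sf he (ltW e0).
have : 0 <= `|x N - f| ^+ 2 := sqr_ge0 _.
move: hN; rewrite ltr_pdivrMr //.
set Sg := \sum_(n < N) _; move=> a b c.
have : Sg * e ^+ 2 = e ^+ 2 * Sg by rewrite mulrC.
lra.
Qed.

Lemma KM_weak f0 : S f0 = f0 ->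
  (forall K : R, exists N, K < \sum_(n < N) mu n * (1 - mu n)) ->
  exists2 zz, S zz = zz & weak_cvg ip x zz.
Proof.
move=> Sf0 hdiv.
have vconv := KM_vconv f0 Sf0 hdiv.
set B := `|x 0%N - f0| + `|f0|.
have hB n : `|x n| <= B.
  have -> : x n = (x n - f0) + f0 by rewrite subrK.
  by apply: le_trans (ler_normD _ _) _; rewrite lerD2r; apply: KM_bound.
have [A [M [hA hmin]]] := @center x B hB.
have SA := @center_fix x B S A M hB neS vconv hA hmin.
exists A => // y.
suff key : forall eps : R, 0 < eps ->
    exists N, forall n, (N <= n)%N -> `|ip A y - ip (x n) y| <= eps.
  apply/cvgrPdist_le => eps eps0.
  by have [N hN] := key eps eps0; exists N.
move=> eps eps0.
apply: contrapT => hno.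
have hno' : forall N, exists n, (N <= n)%N /\ eps < `|ip A y - ip (x n) y|.
  move=> N; apply: contrapT => hN; apply: hno; exists N => n hn.
  rewrite leNgt; apply/negP => hlt; apply: hN; by exists n.
have [w hw] : exists w, forall N, exists n, (N <= n)%N /\ eps < ip (x n - A) w.
  case: (pselect (forall N, exists n, (N <= n)%N /\ eps < ip (x n - A) y)) => hp.
    by exists y.
  exists (- y) => N.
  have [N0 hN0] : exists N0, forall n, (N0 <= n)%N -> ip (x n - A) y <= eps.
    apply: contrapT => hq; apply: hp => N1; apply: contrapT => hr.
    apply: hq; exists N1 => n hn; rewrite leNgt; apply/negP => hlt; apply: hr.
    by exists n.
  have [n [hn hlt]] := hno' (maxn N N0); exists n; split.
    exact: leq_trans (leq_maxl _ _) hn.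
  have := hN0 n (leq_trans (leq_maxr _ _) hn).
  rewrite ipNr ipBl; move: hlt; rewrite distrC.
  set u := ip (x n) y - ip A y => hlt hle.
  have : u < - eps.
    move: hlt; rewrite ltr_normr => /orP[h|h]; first by exfalso; clear -h hle; lra.
    clear -h; lra.
  move=> hu; clear -hu; lra.
clear hno hno'.
have [phi hphi] := choice hw.
have phin n : (n <= phi n)%N by case: (hphi n).
set z := fun n => x (phi n).
have hBz n : `|z n| <= B by apply: hB.
have vz : forall e : R, 0 < e -> exists N, forall n, (N <= n)%N -> `|z n - S (z n)| <= e.
  move=> e e0; have [N hN] := vconv e e0; exists N => n hn.
  by apply: hN; apply: leq_trans hn (phin n).
have [A' [M' [hA' hmin']]] := @center z B hBz.
have SA' := @center_fix z B S A' M' hBz neS vz hA' hmin'.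
have [L hL] := @noninc_cv (fun n => `|x n - A| ^+ 2) (fun n => sqr_ge0 _)
   (fun n => KM_fejer_le A n SA).
have [L' hL'] := @noninc_cv (fun n => `|x n - A'| ^+ 2) (fun n => sqr_ge0 _)
   (fun n => KM_fejer_le A' n SA').
have i1 : L <= M := @Cv_Ub_le _ _ _ hL hA.
have i2 : M <= L' := hmin _ _ (@Cv_Ub _ _ hL').
have i3 : L' <= M' := @Cv_Ub_le _ _ _ (@Cv_sub _ _ _ hL' phin) hA'.
have hAz : Ub (fun n => `|z n - A| ^+ 2) M'.
  apply: (@Ub_le _ L) (@Cv_Ub _ _ (@Cv_sub _ _ _ hL phin)) _.
  exact: le_trans i1 (le_trans i2 i3).
set t := eps / (`|w| ^+ 2 + 1).
have w1 : 0 < `|w| ^+ 2 + 1 by have := sqr_ge0 `|w|; lra.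
have t0 : 0 < t by rewrite divr_gt0.
have ht : t * (`|w| ^+ 2 + 1) = eps by rewrite divfK ?gt_eqF.
have hU : Ub (fun n => `|z n - (A + t *: w)| ^+ 2) (M' - 2 * t * eps + t ^+ 2 * `|w| ^+ 2).
  move=> e e0; have [N hN] := hAz e e0; exists N => n hn.
  have -> : `|z n - (A + t *: w)| ^+ 2 =
      `|z n - A| ^+ 2 - 2 * t * ip (z n - A) w + t ^+ 2 * `|w| ^+ 2.
    by rewrite -!ipxx; ipexp; ring.
  have h1 := hN n hn.
  have h2 : eps < ip (z n - A) w by case: (hphi n).
  have h3 : 2 * t * eps <= 2 * t * ip (z n - A) w.
    by rewrite ler_pM2l ?mulr_gt0 // ltW.
  lra.
have := hmin' _ _ hU.
have : t * `|w| ^+ 2 < eps by lra.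
have : 0 < t * eps by rewrite mulr_gt0.
move=> a b c.
have : t * (2 * eps) <= t * (t * `|w| ^+ 2) by nra.
rewrite ler_pM2l // => d.
exact: (@contra_help _ _ _ eps0 b d).
Qed.

End KM.

Lemma div_conv (g : nat -> R) : (forall n, 0 <= g n) ->
  (\sum_(n <oo) (g n)%:E = +oo)%E -> forall K : R, exists N, K < \sum_(n < N) g n.
Proof.
move=> g0 hs K; apply: contrapT => hno.
have hle : forall N, \sum_(n < N) g n <= K.
  by move=> N; rewrite leNgt; apply/negP => h; apply: hno; exists N.
have : (+oo <= K%:E)%E.
  rewrite -hs; apply: lime_le.
    by apply: is_cvg_nneseries => n _ _; rewrite lee_fin.
  apply: nearW => N; rewrite /= sumEFin lee_fin big_mkord; exact: hle.
by [].
Qed.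

Lemma main_aux (I : finType) (T : I -> H -> H) (a : I -> R)
  (p : nat) (m : 'I_p -> nat) (omega : 'I_p -> R)
  (idx : forall k : 'I_p, 'I_(m k) -> I) :
  (forall i, nonexpansive (T i)) ->
  (\bigcap_i Fix (T i)) !=set0 ->
  (forall i, 0 < a i < 1) ->
  (forall i, averaged (a i) (T i)) ->
  (0 < p)%N ->
  (forall k, (0 < m k)%N) ->
  (forall k, 0 < omega k <= 1) ->
  (forall i, exists k, exists l, idx k l = i) ->
  \sum_(k < p) omega k = 1 ->
  let Tb := Tbar T idx omega in
  let alpha := alpha_bar a idx omega in
  (averaged alpha Tb /\ Fix Tb = \bigcap_i Fix (T i)) /\
  (forall (lam : nat -> R) (x : nat -> H),
     (forall n, 0 < lam n < 1 / alpha) ->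
     (\sum_(n <oo) (lam n * (1 / alpha - lam n))%:E = +oo)%E ->
     (forall n, x n.+1 = x n + lam n *: (Tb (x n) - x n)) ->
     exists2 z, z \in \bigcap_i Fix (T i) & weak_cvg ip x z).
Proof.
move=> neT hne a01 hT p0 m0 om0 surj om1 Tb alpha.
have [avg hfix] := @part_i I T a p m omega idx hne hT p0 m0 om0 surj om1.
split; first by split.
move=> lam x hlam hsum hrec.
case: avg => /andP[al0 al1] neTb [Rb [neRb hTb]].
pose mu n := alpha * lam n.
have mu01 n : 0 < mu n < 1.
  case/andP: (hlam n) => l0 l1; rewrite /mu mulr_gt0 //=.
  by rewrite -ltr_pdivlMl // mulr1 -div1r.
have hx n : x n.+1 = x n + mu n *: (Rb (x n) - x n).
  by rewrite hrec; apply: vec_eq; rewrite /Tb hTb /mu /alpha; ipexp; ring.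
have [z0 hz0] := hne.
have Tz0 : Tbar T idx omega z0 = z0.
  have : (\bigcap_i Fix (T i)) z0 := hz0.
  by rewrite -hfix.
have Rz0 : Rb z0 = z0.
  have : alpha *: (Rb z0 - z0) = 0.
    have -> : alpha *: (Rb z0 - z0) = Tbar T idx omega z0 - z0.
      by apply: vec_eq; rewrite hTb /alpha; ipexp; ring.
    by rewrite Tz0 subrr.
  move/eqP; rewrite scaler_eq0 (gt_eqF al0) /= subr_eq0 => /eqP.
  by [].
have hdiv : forall K : R, exists N, K < \sum_(n < N) mu n * (1 - mu n).
  move=> K.
  have g0 n : 0 <= lam n * (1 / alpha - lam n).
    by case/andP: (hlam n) => l0 l1; rewrite mulr_ge0 ?subr_ge0 ?ltW.
  have [N hN] := @div_conv _ g0 hsum (K / alpha ^+ 2).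
  exists N.
  have -> : \sum_(n < N) mu n * (1 - mu n) =
      alpha ^+ 2 * \sum_(n < N) lam n * (1 / alpha - lam n).
    rewrite mulr_sumr; apply: eq_bigr => n _; rewrite /mu.
    by field; rewrite gt_eqF.
  by move: hN; rewrite ltr_pdivrMr ?exprn_gt0 // mulrC.
have [zz hzz hw] := @KM_weak Rb mu x neRb mu01 hx z0 Rz0 hdiv.
exists zz => //.
rewrite -hfix; apply/mem_set; rewrite /Fix /=.
by rewrite hTb hzz; apply: vec_eq; ipexp; ring.
Qed.

End Hilb.

Theorem proposition3p1 (R : realType) (H : completeNormedModType R)
  (ip : H -> H -> R) (hip : is_inner_product ip)
  (I : finType) (T : I -> H -> H) (a : I -> R)
  (p : nat) (m : 'I_p -> nat) (omega : 'I_p -> R)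
  (idx : forall k : 'I_p, 'I_(m k) -> I) :
  (forall i, nonexpansive (T i)) ->
  (\bigcap_i Fix (T i)) !=set0 ->
  (forall i, 0 < a i < 1) ->
  (forall i, averaged (a i) (T i)) ->
  (0 < p)%N ->
  (forall k, (0 < m k)%N) ->
  (forall k, 0 < omega k <= 1) ->
  (forall i, exists k, exists l, idx k l = i) ->
  \sum_(k < p) omega k = 1 ->
  let Tb := Tbar T idx omega in
  let alpha := alpha_bar a idx omega in
  (averaged alpha Tb /\ Fix Tb = \bigcap_i Fix (T i)) /\
  (forall (lam : nat -> R) (x : nat -> H),
     (forall n, 0 < lam n < 1 / alpha) ->
     (\sum_(n <oo) (lam n * (1 / alpha - lam n))%:E = +oo)%E ->
     (forall n, x n.+1 = x n + lam n *: (Tb (x n) - x n)) ->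
     exists2 z, z \in \bigcap_i Fix (T i) & weak_cvg ip x z).
Proof. exact: (@main_aux R H ip hip I T a p m omega idx). Qed.
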